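(* Let $\mathcal{M}$ be a Riemannian submanifold of a Euclidean space, let $f:\mathcal{M}\times\mathbb{R}^n\to\mathbb{R}$, $\boldsymbol{c}=(c_1,\dots,c_p):\mathcal{M}\times\mathbb{R}^n\to\mathbb{R}^p$ and $\boldsymbol{g}=(g_1,\dots,g_s):\mathbb{R}^n\to\mathbb{R}^s$ be differentiable, and let $(\boldsymbol{x}^*,\boldsymbol{y}^* )$ be feasible, i.e. $\boldsymbol{x}^*\in\mathcal{M}$, $\boldsymbol{c}(\boldsymbol{x}^*,\boldsymbol{y}^* )=\boldsymbol{0}$, $\boldsymbol{g}(\boldsymbol{y}^* )\le\boldsymbol{0}$. Assume the LICQ holds at $\boldsymbol{z}^*=(\boldsymbol{x}^*,\boldsymbol{y}^* )$. Let $\epsilon\ge0$. If $\max\{m_x(\boldsymbol{x}^*,\boldsymbol{y}^* ),m_y(\boldsymbol{x}^*,\boldsymbol{y}^* )\}\le\epsilon$, then $(\boldsymbol{x}^*,\boldsymbol{y}^* )$ is an $\epsilon$-approximate first-order stationary point; and if $m_{KKT}(\boldsymbol{x}^*,\boldsymbol{y}^* )\le\epsilon$, then $(\boldsymbol{x}^*,\boldsymbol{y}^* )$ is an $\epsilon$-approximate first-order KKT point.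
   Context: Write $\mathcal{M}'=\mathcal{M}\times\mathbb{R}^n$ (product Riemannian manifold), $\boldsymbol{z}=(\boldsymbol{x},\boldsymbol{y})$, and $\bar f(\boldsymbol{z})=f(\boldsymbol{x},\boldsymbol{y})$, $\bar c_i(\boldsymbol{z})=c_i(\boldsymbol{x},\boldsymbol{y})$, $\bar g_j(\boldsymbol{z})=g_j(\boldsymbol{y})$. $\operatorname{grad}$ denotes the Riemannian gradient (with respect to $\boldsymbol{x}$ on $\mathcal{M}$ for $f,c_i$; on $\mathcal{M}'$ for $\bar f,\bar c_i,\bar g_j$), $\nabla_y$ the Euclidean gradient in $\boldsymbol{y}$, $\langle\cdot,\cdot\rangle_{\boldsymbol{x}}$ and $\|\cdot\|_{\boldsymbol{x}}$ the Riemannian metric and norm. $\mathcal{A}(\boldsymbol{y})=\{j: g_j(\boldsymbol{y})=0\}$. LICQ at $\boldsymbol{z}$: the vectors $\{\operatorname{grad}\bar c_i(\boldsymbol{z})\}_{i=1}^p\cup\{\operatorname{grad}\bar g_j(\boldsymbol{z})\}_{j\in\mathcal{A}(\boldsymbol{y})}$ are linearly independent in $T_{\boldsymbol{z}}\mathcal{M}'$. Measures: $m_x(\boldsymbol{x},\boldsymbol{y})=|\min\{\langle\operatorname{grad}f(\boldsymbol{x},\boldsymbol{y}),\boldsymbol{d}\rangle_{\boldsymbol{x}}:\boldsymbol{d}\in T_{\boldsymbol{x}}\mathcal{M},\ \langle\operatorname{grad}c_i(\boldsymbol{x},\boldsymbol{y}),\boldsymbol{d}\rangle_{\boldsymbol{x}}=0\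 \forall i,\ \|\boldsymbol{d}\|_{\boldsymbol{x}}\le1\}|$; $m_y(\boldsymbol{x},\boldsymbol{y})=|\min\{\langle\nabla_yf(\boldsymbol{x},\boldsymbol{y}),\boldsymbol{d}\rangle:\boldsymbol{d}\in\mathbb{R}^n,\ \langle\nabla_yc_i(\boldsymbol{x},\boldsymbol{y}),\boldsymbol{d}\rangle=0\ \forall i,\ \langle\nabla g_j(\boldsymbol{y}),\boldsymbol{d}\rangle\le0\ \forall j\in\mathcal{A}(\boldsymbol{y}),\ \|\boldsymbol{d}\|\le1\}|$; $m_{KKT}(\boldsymbol{x},\boldsymbol{y})=|\min\{\langle\operatorname{grad}\bar f(\boldsymbol{z}),\boldsymbol{d}\rangle_{\boldsymbol{z}}:\boldsymbol{d}\in T_{\boldsymbol{z}}\mathcal{M}',\ \langle\operatorname{grad}\bar c_i(\boldsymbol{z}),\boldsymbol{d}\rangle_{\boldsymbol{z}}=0\ \forall i,\ \langle\operatorname{grad}\bar g_j(\boldsymbol{z}),\boldsymbol{d}\rangle_{\boldsymbol{z}}\le0\ \forall j\in\mathcal{A}(\boldsymbol{y}),\ \|\boldsymbol{d}\|_{\boldsymbol{z}}\le1\}|$. A feasible $(\boldsymbol{x}^*,\boldsymbol{y}^* )$ is an $\epsilon$-approximate first-order stationary point if (a) there is $\boldsymbol{\lambda}\in\mathbb{R}^p$ with $\|\operatorname{grad}f(\boldsymbol{x}^*,\boldsymbol{y}^* )+\sum_i\lambda_i\operatorname{grad}c_i(\boldsymbol{x}^*,\boldsymbol{y}^* )\|_{\boldsymbol{x}^*}\le\epsilon$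 and (b) there are $\boldsymbol{\lambda}'\in\mathbb{R}^p$, $\boldsymbol{\mu}\in\mathbb{R}^s_+$ with $\|\nabla_yf+\sum_i\lambda'_i\nabla_yc_i+\sum_j\mu_j\nabla g_j\|\le\epsilon$ at $(\boldsymbol{x}^*,\boldsymbol{y}^* )$ and $\mu_jg_j(\boldsymbol{y}^* )=0$ for all $j$. It is an $\epsilon$-approximate first-order KKT point if there are $\boldsymbol{\lambda}\in\mathbb{R}^p$, $\boldsymbol{\mu}\in\mathbb{R}^s_+$ with $\|\operatorname{grad}\bar f(\boldsymbol{z}^* )+\sum_i\lambda_i\operatorname{grad}\bar c_i(\boldsymbol{z}^* )+\sum_j\mu_j\operatorname{grad}\bar g_j(\boldsymbol{z}^* )\|_{\boldsymbol{z}^*}\le\epsilon$ and $\mu_j\bar g_j(\boldsymbol{z}^* )=0$ for all $j$. *)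

(* Defs.v *)
From HB Require Import structures.
From mathcomp Require Import all_boot all_order all_algebra.
From mathcomp Require Import all_classical all_reals all_analysis.
Set Implicit Arguments. Unset Strict Implicit. Unset Printing Implicit Defensive.
Import Order.TTheory GRing.Theory Num.Theory.
Import numFieldNormedType.Exports.
Local Open Scope classical_set_scope.
Local Open Scope ring_scope.

Section Defs.
Variable R : realType.

Definition inner {K : nat} (u v : 'rV[R]_K) : R := \sum_(i < K) u 0 i * v 0 i.
Definition enorm {K : nat} (u : 'rV[R]_K) : R := Num.sqrt (inner u u).

Definition egrad {K : nat} (f : 'rV[R]_K -> R) (x : 'rV[R]_K) : 'rV[R]_K :=
  \row_(i < K) derive f x (delta_mx 0 i).

(* h : R^K -> R^m is a local defining function of M at x on the open
   neighbourhood U: h is C^1 on U (continuous partial derivatives), Dh(x)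
   is surjective (Jacobian of rank m), and M /\ U = h^{-1}(0) /\ U. *)
Definition local_defining_fun {K m : nat} (M : set 'rV[R]_K) (x : 'rV[R]_K)
    (h : 'rV[R]_K -> 'rV[R]_m) (U : set 'rV[R]_K) : Prop :=
  [/\ open U /\ U x,
      (forall y, U y -> differentiable h y),
      (forall (i : 'I_K) y, U y ->
          {for y, continuous (fun z => derive h z (delta_mx 0 i))}),
      \rank (\matrix_(i < K) derive h x (delta_mx 0 i)) = m
    & (forall y, U y -> (M y <-> h y = 0))].

(* embedded (hence Riemannian, with the induced Euclidean metric)
   submanifold of R^K *)
Definition is_submanifold {K : nat} (M : set 'rV[R]_K) : Prop :=
  forall x, M x -> exists (m : nat) (h : 'rV[R]_K -> 'rV[R]_m) U,
    local_defining_fun M x h U.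

Definition tangent {K : nat} (M : set 'rV[R]_K) (x : 'rV[R]_K) : set 'rV[R]_K :=
  [set d | forall (m : nat) (h : 'rV[R]_K -> 'rV[R]_m) U,
     local_defining_fun M x h U -> derive h x d = 0].

(* Riemannian gradient on M (induced metric): orthogonal projection of the
   Euclidean gradient onto T_x M *)
Definition rgrad {K : nat} (M : set 'rV[R]_K) (f : 'rV[R]_K -> R) (x : 'rV[R]_K)
  : 'rV[R]_K :=
  xget 0 [set gr | tangent M x gr /\
            forall d, tangent M x d -> inner (egrad f x - gr) d = 0].

(* Product manifold M' = M x R^n: tangent space T_x M x R^n, product metric *)
Definition ptangent {K n : nat} (M : set 'rV[R]_K) (x : 'rV[R]_K)
  : set ('rV[R]_K * 'rV[R]_n) := [set d | tangent M x d.1].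
Definition pinner {K n : nat} (u v : 'rV[R]_K * 'rV[R]_n) : R :=
  inner u.1 v.1 + inner u.2 v.2.
Definition pnorm {K n : nat} (u : 'rV[R]_K * 'rV[R]_n) : R := Num.sqrt (pinner u u).

Definition pgrad {K n : nat} (M : set 'rV[R]_K) (F : 'rV[R]_K -> 'rV[R]_n -> R)
    (x : 'rV[R]_K) (y : 'rV[R]_n) : 'rV[R]_K * 'rV[R]_n :=
  xget (0, 0) [set gr | ptangent M x gr /\
     forall d, ptangent M x d ->
       pinner (egrad (F ^~ y) x - gr.1, egrad (F x) y - gr.2) d = 0].

Definition LICQ {K n p s : nat} (M : set 'rV[R]_K)
    (c : 'I_p -> 'rV[R]_K -> 'rV[R]_n -> R) (g : 'I_s -> 'rV[R]_n -> R)
    (x : 'rV[R]_K) (y : 'rV[R]_n) : Prop :=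
  forall (a : 'I_p -> R) (b : 'I_s -> R),
    (\sum_(i < p) a i *: (pgrad M (c i) x y).1
       + \sum_(j < s | g j y == 0) b j *: (pgrad M (fun _ => g j) x y).1 = 0 /\
     \sum_(i < p) a i *: (pgrad M (c i) x y).2
       + \sum_(j < s | g j y == 0) b j *: (pgrad M (fun _ => g j) x y).2 = 0) ->
    (forall i, a i = 0) /\ (forall j, g j y = 0 -> b j = 0).

(* the measures; the minima are over compact nonempty sets, written as inf *)
Definition m_x {K n p : nat} (M : set 'rV[R]_K) (f : 'rV[R]_K -> 'rV[R]_n -> R)
    (c : 'I_p -> 'rV[R]_K -> 'rV[R]_n -> R) (x : 'rV[R]_K) (y : 'rV[R]_n) : R :=
  `| inf [set r | exists d, [/\ tangent M x d,
        (forall i, inner (rgrad M (c i ^~ y) x) d = 0),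
        enorm d <= 1 & r = inner (rgrad M (f ^~ y) x) d]] |.

Definition m_y {K n p s : nat} (f : 'rV[R]_K -> 'rV[R]_n -> R)
    (c : 'I_p -> 'rV[R]_K -> 'rV[R]_n -> R) (g : 'I_s -> 'rV[R]_n -> R)
    (x : 'rV[R]_K) (y : 'rV[R]_n) : R :=
  `| inf [set r | exists d : 'rV[R]_n, [/\
        (forall i, inner (egrad (c i x) y) d = 0),
        (forall j, g j y = 0 -> inner (egrad (g j) y) d <= 0),
        enorm d <= 1 & r = inner (egrad (f x) y) d]] |.

Definition m_KKT {K n p s : nat} (M : set 'rV[R]_K) (f : 'rV[R]_K -> 'rV[R]_n -> R)
    (c : 'I_p -> 'rV[R]_K -> 'rV[R]_n -> R) (g : 'I_s -> 'rV[R]_n -> R)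
    (x : 'rV[R]_K) (y : 'rV[R]_n) : R :=
  `| inf [set r | exists d : 'rV[R]_K * 'rV[R]_n, [/\ ptangent M x d,
        (forall i, pinner (pgrad M (c i) x y) d = 0),
        (forall j, g j y = 0 -> pinner (pgrad M (fun _ => g j) x y) d <= 0),
        pnorm d <= 1 & r = pinner (pgrad M f x y) d]] |.

Definition approx_stationary {K n p s : nat} (M : set 'rV[R]_K)
    (f : 'rV[R]_K -> 'rV[R]_n -> R) (c : 'I_p -> 'rV[R]_K -> 'rV[R]_n -> R)
    (g : 'I_s -> 'rV[R]_n -> R) (eps : R) (x : 'rV[R]_K) (y : 'rV[R]_n) : Prop :=
  (exists lam : 'I_p -> R,
     enorm (rgrad M (f ^~ y) x + \sum_(i < p) lam i *: rgrad M (c i ^~ y) x) <= eps) /\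
  (exists (lam' : 'I_p -> R) (mu : 'I_s -> R), (forall j, 0 <= mu j) /\
     enorm (egrad (f x) y + \sum_(i < p) lam' i *: egrad (c i x) y
            + \sum_(j < s) mu j *: egrad (g j) y) <= eps /\
     (forall j, mu j * g j y = 0)).

Definition approx_KKT {K n p s : nat} (M : set 'rV[R]_K)
    (f : 'rV[R]_K -> 'rV[R]_n -> R) (c : 'I_p -> 'rV[R]_K -> 'rV[R]_n -> R)
    (g : 'I_s -> 'rV[R]_n -> R) (eps : R) (x : 'rV[R]_K) (y : 'rV[R]_n) : Prop :=
  exists (lam : 'I_p -> R) (mu : 'I_s -> R), (forall j, 0 <= mu j) /\
    pnorm ((pgrad M f x y).1 + \sum_(i < p) lam i *: (pgrad M (c i) x y).1
             + \sum_(j < s) mu j *: (pgrad M (fun _ => g j) x y).1,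
           (pgrad M f x y).2 + \sum_(i < p) lam i *: (pgrad M (c i) x y).2
             + \sum_(j < s) mu j *: (pgrad M (fun _ => g j) x y).2) <= eps /\
    (forall j, mu j * g j y = 0).

End Defs.

(* Main.v *)
Require Import Defs.
From HB Require Import structures.
From mathcomp Require Import all_boot all_order all_algebra.
From mathcomp Require Import all_classical all_reals all_analysis.
From mathcomp Require Import ring lra.
Set Implicit Arguments. Unset Strict Implicit. Unset Printing Implicit Defensive.
Import Order.TTheory GRing.Theory Num.Theory.
Import numFieldNormedType.Exports.
Local Open Scope classical_set_scope.
Local Open Scope ring_scope.

Definition ipform (R : realType) (V : lmodType R) (ip : V -> V -> R) :=
  [/\ (forall x y z, ip (x + y) z = ip x z + ip y z),
      (forall a x z, ip (a *: x) z = a * ip x z),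
      (forall x y, ip x y = ip y x) &
      (forall x, 0 <= ip x x)].

Lemma ipDl R V ip (H : @ipform R V ip) x y z : ip (x + y) z = ip x z + ip y z.
Proof. by case: H. Qed.
Lemma ipZl R V ip (H : @ipform R V ip) a x z : ip (a *: x) z = a * ip x z.
Proof. by case: H. Qed.
Lemma ipC R V ip (H : @ipform R V ip) x y : ip x y = ip y x.
Proof. by case: H. Qed.
Lemma ipge0 R V ip (H : @ipform R V ip) x : 0 <= ip x x.
Proof. by case: H. Qed.
Lemma ipDr R V ip (H : @ipform R V ip) x y z : ip z (x + y) = ip z x + ip z y.
Proof. by rewrite !(ipC H z) ipDl. Qed.
Lemma ipZr R V ip (H : @ipform R V ip) a x z : ip z (a *: x) = a * ip z x.
Proof. by rewrite !(ipC H z) ipZl. Qed.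
Lemma ip0l R V ip (H : @ipform R V ip) z : ip 0 z = 0.
Proof. by have := ipZl H 0 0 z; rewrite scale0r mul0r. Qed.
Lemma ip0r R V ip (H : @ipform R V ip) z : ip z 0 = 0.
Proof. by rewrite (ipC H) (ip0l H). Qed.
Lemma ipNl R V ip (H : @ipform R V ip) x z : ip (- x) z = - ip x z.
Proof. by rewrite -scaleN1r (ipZl H) mulN1r. Qed.
Lemma ip_suml R V ip (H : @ipform R V ip) (I : finType) (P : pred I) (F : I -> V) z :
  ip (\sum_(i | P i) F i) z = \sum_(i | P i) ip (F i) z.
Proof.
exact: (big_morph (fun x => ip x z) (fun x y => ipDl H x y z) (ip0l H z)).
Qed.
Lemma ip_sumr R V ip (H : @ipform R V ip) (I : finType) (P : pred I) (F : I -> V) z :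
  ip z (\sum_(i | P i) F i) = \sum_(i | P i) ip z (F i).
Proof. rewrite (ipC H) (ip_suml H); apply: eq_bigr => i _; exact: ipC. Qed.

Lemma ipexp2 R V ip (H : @ipform R V ip) x y :
  ip (x + y) (x + y) = ip x x + 2 * ip x y + ip y y.
Proof. rewrite (ipDl H) !(ipDr H) (ipC H y x); ring. Qed.

Lemma ipexp R V ip (H : @ipform R V ip) x t y :
  ip (x + t *: y) (x + t *: y) = ip x x + 2 * t * ip x y + t ^+ 2 * ip y y.
Proof. rewrite (ipexp2 H) (ipZl H) !(ipZr H); ring. Qed.

Lemma ip_zero_norm R V ip (H : @ipform R V ip) x z : ip z z = 0 -> ip x z = 0.
Proof.
move=> hz; apply/eqP/negPn/negP => ha.
pose t := - (ip x x + 1) / (2 * ip x z).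
have := ipge0 H (x + t *: z); rewrite (ipexp H) hz mulr0 addr0.
have -> : 2 * t * ip x z = - (ip x x + 1) by rewrite /t; field; rewrite ?mulf_neq0 // ?pnatr_eq0 //.
lra.
Qed.

Definition res (R : realType) (V : lmodType R) (I : finType) (e : I -> V) (w : V) (mu : I -> R) : V :=
  w + \sum_k mu k *: e k.

Lemma sumD (R : realType) (V : lmodType R) (I : finType) (e : I -> V) (a b : I -> R) :
  \sum_k (a k + b k) *: e k = \sum_k a k *: e k + \sum_k b k *: e k.
Proof. rewrite -big_split; apply: eq_bigr => k _; by rewrite scalerDl. Qed.

Lemma sum_comb (R : realType) (V : lmodType R) (I : finType) (e : I -> V) (a b : I -> R) t :
  \sum_k (a k + t * b k) *: e k = \sum_k a k *: e k + t *: \sum_k b k *: e k.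
Proof. rewrite scaler_sumr -big_split; apply: eq_bigr => k _; by rewrite scalerDl scalerA. Qed.

Lemma sum_delta (R : realType) (V : lmodType R) (I : finType) (e : I -> V) j :
  \sum_k (k == j)%:R *: e k = e j.
Proof.
rewrite (bigD1 j) //= eqxx scale1r big1 ?addr0 // => k /negbTE ->.
by rewrite scale0r.
Qed.

Lemma orth_sum R V ip (H : @ipform R V ip) (I : finType) (e : I -> V) (S : {set I}) c r :
  (forall k, k \notin S -> c k = 0) -> (forall j, j \in S -> ip r (e j) = 0) ->
  ip r (\sum_k c k *: e k) = 0.
Proof.
move=> h1 h2; rewrite (ip_sumr H) big1 // => k _; rewrite (ipZr H).
by case: (boolP (k \in S)) => kS; [rewrite h2 // mulr0 | rewrite h1 // mul0r].
Qed.

Lemma proj_exists R V ip (H : @ipform R V ip) (I : finType) (e : I -> V) n :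
  forall S : {set I}, #|S| = n -> forall w, exists c : I -> R,
   (forall k, k \notin S -> c k = 0) /\
   (forall j, j \in S -> ip (res e w c) (e j) = 0).
Proof.
elim: n => [|n IH] S HS w.
  exists (fun _ => 0); split => // j.
  by move/eqP: HS; rewrite cards_eq0 => /eqP ->; rewrite inE.
have : S != finset.set0 by rewrite -card_gt0 HS.
case/set0Pn => k kS.
have HS0 : #|S :\ k| = n by move: HS; rewrite (cardsD1 k) kS add1n => -[].
have [c [c0 cO]] := IH _ HS0 w.
have [c' [c'0 c'O]] := IH _ HS0 (e k).
set r0 := res e w c in cO *.
set rk := res e (e k) c' in c'O *.
pose t := if ip rk rk == 0 then 0 else - ip r0 rk / ip rk rk.
have Ht : ip r0 rk + t * ip rk rk = 0.
  rewrite /t; case: eqP => [h|h]; first by rewrite mul0r addr0 (ip_zero_norm H).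
  by field; apply/eqP.
exists (fun j => c j + t * (c' j + (j == k)%:R)).
have Er : res e w (fun j => c j + t * (c' j + (j == k)%:R)) = r0 + t *: rk.
  rewrite /res sum_comb sumD sum_delta addrA; congr (_ + _ *: _).
  by rewrite addrC.
rewrite Er; split.
  move=> j jS; have jS0 : j \notin S :\ k by rewrite inE negb_and jS orbT.
  rewrite c0 // c'0 //; have : j != k by apply: contraNneq jS => ->.
  by move/negbTE->; rewrite addr0 mulr0 addr0.
have hS0 : forall j, j \in S :\ k -> ip (r0 + t *: rk) (e j) = 0.
  by move=> j jS0; rewrite (ipDl H) (ipZl H) cO // c'O // mulr0 addr0.
move=> j jS; case: (eqVneq j k) => [->|jk]; last by apply: hS0; rewrite !inE jk jS.
have h1 : ip (r0 + t *: rk) rk = 0 by rewrite (ipDl H) (ipZl H).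
move: h1; rewrite {2}/rk /res (ipDr H) (orth_sum H c'0 hS0) addr0.
by [].
Qed.

Lemma res_shift (R : realType) (V : lmodType R) (I : finType) (e : I -> V) w (a b : I -> R) t :
  res e w (fun k => a k + t * b k) = res e w a + t *: \sum_k b k *: e k.
Proof. by rewrite /res sum_comb addrA. Qed.

Lemma res_diff (R : realType) (V : lmodType R) (I : finType) (e : I -> V) w (a b : I -> R) :
  res e w b = res e w a + \sum_k (b k - a k) *: e k.
Proof.
have := res_shift e w a (fun k => b k - a k) 1; rewrite scale1r => <-.
by rewrite /res; congr (_ + _); apply: eq_bigr => k _; rewrite mul1r addrC subrK.
Qed.

Lemma proj_min R V ip (H : @ipform R V ip) (I : finType) (e : I -> V) (S : {set I}) w c c' :
  (forall k, k \notin S -> c k = 0) ->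
  (forall j, j \in S -> ip (res e w c) (e j) = 0) ->
  (forall k, k \notin S -> c' k = 0) ->
  ip (res e w c) (res e w c) <= ip (res e w c') (res e w c').
Proof.
move=> c0 cO c'0; rewrite (res_diff e w c c') (ipexp2 H).
rewrite (orth_sum H (S := S)) ?mulr0 ?addr0; last by [].
  by rewrite lerDl ipge0.
by move=> k kS; rewrite c0 // c'0 // subrr.
Qed.

Lemma convex_step R V ip (H : @ipform R V ip) (I : finType) (e : I -> V) w mu c t :
  ip (res e w c) (res e w c) <= ip (res e w mu) (res e w mu) -> 0 <= t <= 1 ->
  ip (res e w (fun k => mu k + t * (c k - mu k))) (res e w (fun k => mu k + t * (c k - mu k)))
   <= ip (res e w mu) (res e w mu).
Proof.
move=> hc /andP[t0 t1]; rewrite res_shift (ipexp H).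
move: hc; rewrite (res_diff e w mu c) (ipexp2 H).
set x := ip _ _; set p := ip _ _; set q := ip _ _ => hc.
have q0 : 0 <= q by apply: ipge0.
have h1 : 0 <= t * (1 - t) * q by rewrite !mulr_ge0 // subr_ge0.
have h2 : t * (2 * p + q) <= 0 by rewrite mulr_ge0_le0 //; lra.
have -> : x + 2 * t * p + t ^+ 2 * q = x + t * (2 * p + q) - t * (1 - t) * q by ring.
lra.
Qed.

Lemma real_fo (R : realType) (a b T : R) : 0 <= b -> 0 < T ->
  (forall t, 0 < t -> t <= T -> 0 <= 2 * t * a + t ^+ 2 * b) -> 0 <= a.
Proof.
move=> b0 T0 h; rewrite leNgt; apply/negP => a0.
pose t0 := - a / (b + 1).
have t0p : 0 < t0 by rewrite /t0 divr_gt0 // ?oppr_gt0 // ltr_wpDl.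
have t0e : t0 * (b + 1) = - a by rewrite /t0 mulfVK // gt_eqF // ltr_wpDl.
pose t := Num.min T t0.
have tp : 0 < t by rewrite /t lt_min T0 t0p.
have tT : t <= T by rewrite /t ge_min lexx.
have tt0 : t <= t0 by rewrite /t ge_min lexx orbT.
have := h t tp tT.
have h1 : t * (t * b) <= t * (t0 * b) by rewrite ler_wpM2l ?(ltW tp) // ler_wpM2r.
have h2 : t * (t0 * b) = t * (- a - t0) by rewrite -t0e; ring.
have h3 : t * (a - t0) < 0 by rewrite pmulr_rlt0 // subr_lt0 (lt_trans a0).
have -> : 2 * t * a + t ^+ 2 * b = 2 * t * a + t * (t * b) by ring.
rewrite leNgt => /negP; apply.
have : 2 * t * a + t * (t0 * b) = t * (a - t0) by rewrite h2; ring.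
lra.
Qed.

Lemma descent R V ip (H : @ipform R V ip) (I : finType) (e : I -> V) (w : V)
  (cS : {set I} -> I -> R)
  (cS0 : forall (S : {set I}) k, k \notin S -> cS S k = 0)
  (cSO : forall (S : {set I}) j, j \in S -> ip (res e w (cS S)) (e j) = 0) n :
  forall S : {set I}, (#|S| < n)%N -> forall mu, (forall k, 0 <= mu k) ->
  (forall k, k \notin S -> mu k = 0) ->
  exists S', [forall k, 0 <= cS S' k] /\
    ip (res e w (cS S')) (res e w (cS S')) <= ip (res e w mu) (res e w mu).
Proof.
elim: n => [//|n IH] S HS mu mu0 muS.
set c := cS S.
have hmin : ip (res e w c) (res e w c) <= ip (res e w mu) (res e w mu)
  := proj_min H (cS0 S) (cSO S) muS.
case: (boolP [forall k, 0 <= c k]) => [feas|]; first by exists S.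
move/forallPn => [k0]; rewrite -ltNge => hk0.
pose F k := mu k / (mu k - c k).
case: (@arg_minP _ R _ k0 (fun k => c k < 0) F hk0) => j jneg jmin.
have dpos k : c k < 0 -> 0 < mu k - c k by move=> h; have := mu0 k; lra.
pose t := F j.
have t0 : 0 <= t by rewrite /t /F divr_ge0 // ltW // dpos.
have t1 : t <= 1 by rewrite /t /F ler_pdivrMr ?dpos // mul1r; lra.
pose nu k := mu k + t * (c k - mu k).
have nu0 k : 0 <= nu k.
  rewrite /nu; case: (ltP (c k) 0) => ck.
    have := jmin k ck; rewrite -/t /F ler_pdivlMr ?dpos // => h.
    nra.
  have := mu0 k; nra.
have nuj : nu j = 0.
  rewrite /nu /t /F; have := dpos j jneg => d; field; lra.
have jS : j \in S.
  apply/negPn/negP => /cS0 hj; move: jneg; rewrite /c hj; lra.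
have nuS k : k \notin S :\ j -> nu k = 0.
  rewrite !inE negb_and negbK; case: (eqVneq k j) => [->|_] //= kS.
  by rewrite /nu muS // /c cS0 // subrr mulr0 addr0.
have HS' : (#|S :\ j| < n)%N.
  by move: HS; rewrite (cardsD1 j S) jS add1n ltnS.
have [S' [fS' hS']] := IH _ HS' nu nu0 nuS.
exists S'; split => //; apply: le_trans hS' _.
by apply: convex_step => //; rewrite t0 t1.
Qed.

Lemma min_exists R V ip (H : @ipform R V ip) (I : finType) (e : I -> V) w :
  exists mu : I -> R, (forall k, 0 <= mu k) /\
   forall nu, (forall k, 0 <= nu k) ->
     ip (res e w mu) (res e w mu) <= ip (res e w nu) (res e w nu).
Proof.
have hS : forall S : {set I}, exists c : I -> R, (forall k, k \notin S -> c k = 0) /\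
    (forall j, j \in S -> ip (res e w c) (e j) = 0).
  by move=> S; apply: (proj_exists H e (erefl #|S|)).
case: (choice hS) => cS hcS.
have cS0 S := (hcS S).1.
have cSO S := (hcS S).2.
have D := descent H cS0 cSO (n := #|(finset.setT : {set I})|.+1).
have nS : forall (nu : I -> R) k, k \notin (finset.setT : {set I}) -> nu k = 0 by move=> ? k; rewrite finset.in_setT.
have [S0 [f0 _]] := D (finset.setT : {set I}) (ltnSn _) (fun _ => 0) (fun _ => lexx 0) (nS _).
case: (@arg_minP _ R _ S0 (fun S => [forall k, 0 <= cS S k])
   (fun S => ip (res e w (cS S)) (res e w (cS S))) f0) => Sm fSm hSm.
exists (cS Sm); split; first by move=> k; move/forallP: fSm.
move=> nu nu0.
have [S' [fS' hS']] := D (finset.setT : {set I}) (ltnSn _) nu nu0 (nS _).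
exact: le_trans (hSm _ fS') hS'.
Qed.

Lemma kkt R V ip (H : @ipform R V ip) (I : finType) (e : I -> V) w (mu : I -> R) :
  (forall k, 0 <= mu k) ->
  (forall nu, (forall k, 0 <= nu k) ->
     ip (res e w mu) (res e w mu) <= ip (res e w nu) (res e w nu)) ->
  forall k, 0 <= ip (res e w mu) (e k) /\ mu k * ip (res e w mu) (e k) = 0.
Proof.
move=> mu0 hmin k.
set u := res e w mu.
have shift t : res e w (fun j => mu j + t * (j == k)%:R) = u + t *: e k.
  by rewrite res_shift sum_delta.
have gen t : 0 <= mu k + t -> 0 <= 2 * t * ip u (e k) + t ^+ 2 * ip (e k) (e k).
  move=> ht; have := hmin (fun j => mu j + t * (j == k)%:R).
  rewrite shift (ipexp H) -/u => h.
  suff /h : forall j, 0 <= mu j + t * (j == k)%:R by lra.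
  move=> j; case: (eqVneq j k) => [->|_]; first by rewrite mulr1.
  by rewrite mulr0 addr0.
have bk := ipge0 H (e k).
have a0 : 0 <= ip u (e k).
  apply: (real_fo bk ltr01) => t t0 _; apply: gen; have := mu0 k; lra.
split => //.
case: (eqVneq (mu k) 0) => [->|mk]; first by rewrite mul0r.
have mkp : 0 < mu k by rewrite lt0r mk mu0.
have : 0 <= - ip u (e k).
  apply: (real_fo bk mkp) => t t0 tm.
  have -> : 2 * t * - ip u (e k) + t ^+ 2 * ip (e k) (e k) =
     2 * (- t) * ip u (e k) + (- t) ^+ 2 * ip (e k) (e k) by rewrite sqrrN; ring.
  apply: gen; lra.
move=> h; have -> : ip u (e k) = 0 by lra.
by rewrite mulr0.
Qed.

Lemma descent_dir R V ip (H : @ipform R V ip) (T : set V) (T0 : T 0)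
  (TZD : forall a x y, T x -> T y -> T (a *: x + y)) (I : finType) (e : I -> V) v :
  T v -> (forall k, T (e k)) ->
  exists mu : I -> R, (forall k, 0 <= mu k) /\ exists d, [/\ T d,
     (forall k, ip (e k) d <= 0), ip d d <= 1 &
     ip v d = - Num.sqrt (ip (res e v mu) (res e v mu))].
Proof.
move=> Tv Te.
have [mu [mu0 hmin]] := min_exists H e v.
have hk := kkt H mu0 hmin.
exists mu; split => //.
set u := res e v mu in hk *.
have TD : forall x y, T x -> T y -> T (x + y).
  by move=> x y hx hy; rewrite -[x]scale1r; exact: TZD.
have Tu : T u.
  rewrite /u /res; apply: (TD) => //; apply: (big_ind T T0 TD) => k _.
  by rewrite -[_ *: _]addr0; exact: TZD.
have Nu : ip v u = ip u u.
  have -> : v = u - \sum_k mu k *: e k by rewrite /u /res addrK.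
  rewrite (ipDl H) (ipNl H) (ip_suml H) big1 ?oppr0 ?addr0 // => k _.
  by rewrite (ipZl H) (ipC H); exact: (hk k).2.
have u0 := ipge0 H u.
case: (eqVneq (ip u u) 0) => [uz|unz].
  exists 0; split => //.
  - by move=> k; rewrite (ip0r H).
  - by rewrite (ip0r H).
  - by rewrite (ip0r H) uz sqrtr0 oppr0.
have sp : 0 < Num.sqrt (ip u u) by rewrite sqrtr_gt0 lt0r unz u0.
have ss : Num.sqrt (ip u u) ^+ 2 = ip u u by rewrite sqr_sqrtr.
set s := Num.sqrt (ip u u) in sp ss *.
exists ((- s^-1) *: u); split.
- by rewrite -[_ *: u]addr0; apply: TZD.
- move=> k; rewrite (ipZr H) (ipC H) mulNr oppr_le0 mulr_ge0 //.
    by rewrite invr_ge0 ltW.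
  exact: (hk k).1.
- rewrite (ipZl H) (ipZr H) -ss.
  have -> : - s^-1 * (- s^-1 * s ^+ 2) = 1 by field; rewrite gt_eqF.
  by [].
- rewrite (ipZr H) Nu -ss; field; rewrite gt_eqF //.
Qed.

Lemma eq_ineq_dir R V ip (H : @ipform R V ip) (T : set V) (T0 : T 0)
  (TZD : forall a x y, T x -> T y -> T (a *: x + y)) p s
  (a : 'I_p -> V) (b : 'I_s -> V) (act : pred 'I_s) v :
  T v -> (forall i, T (a i)) -> (forall j, T (b j)) ->
  exists (lam : 'I_p -> R) (mu : 'I_s -> R), (forall j, 0 <= mu j) /\
   (forall j, ~~ act j -> mu j = 0) /\
   exists d, [/\ T d, (forall i, ip (a i) d = 0), (forall j, act j -> ip (b j) d <= 0),
     ip d d <= 1 &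
     ip v d = - Num.sqrt (ip (v + \sum_i lam i *: a i + \sum_j mu j *: b j)
                             (v + \sum_i lam i *: a i + \sum_j mu j *: b j))].
Proof.
move=> Tv Ta Tb.
pose e (k : ('I_p + 'I_p) + 'I_s) : V :=
  match k with inl (inl i) => a i | inl (inr i) => - a i
             | inr j => if act j then b j else 0 end.
have Te : forall k, T (e k).
  case => [[i|i]|j] /=; first exact: Ta.
    by rewrite -scaleN1r -[_ *: _]addr0; apply: TZD.
  by case: (act j).
have [mu [mu0 [d [Td hd dd vd]]]] := descent_dir H T0 TZD Tv Te.
exists (fun i => mu (inl (inl i)) - mu (inl (inr i))).
exists (fun j => if act j then mu (inr j) else 0).
split; first by move=> j; case: (act j).
split; first by move=> j /negbTE ->.
exists d; split => //.
- move=> i; have h1 := hd (inl (inl i)); have h2 := hd (inl (inr i)).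
  rewrite /= (ipNl H) in h2; rewrite /= in h1; lra.
- by move=> j aj; have := hd (inr j); rewrite /= aj.
- rewrite vd; congr (- Num.sqrt _).
  have -> : res e v mu = v + \sum_i (mu (inl (inl i)) - mu (inl (inr i))) *: a i
                + \sum_j (if act j then mu (inr j) else 0) *: b j.
    rewrite /res big_sumType /= big_sumType /= addrA; congr (_ + _ + _).
      rewrite -big_split /=; apply: eq_bigr => i _.
      by rewrite scalerN -scaleNr -scalerDl.
    by apply: eq_bigr => j _; case: (act j); rewrite ?scaler0 ?scale0r.
  by [].
Qed.

Lemma sqrt_le1 (R : realType) (x : R) : (Num.sqrt x <= 1) = (x <= 1).
Proof. by rewrite -{1}sqrtr1 ler_sqrt // ler01. Qed.

Lemma lb_ip R V ip (H : @ipform R V ip) v d : ip d d <= 1 -> - ((ip v v + 1) / 2) <= ip v d.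
Proof. move=> dd; have := ipge0 H (v + d); rewrite (ipexp2 H); lra. Qed.

Lemma inf_step (R : realType) (E : set R) r0 m L : E r0 -> r0 <= - m ->
  (forall r, E r -> L <= r) -> 0 <= m -> m <= `|inf E|.
Proof.
move=> Er0 hr0 hL m0.
have hlb : has_lbound E by exists L => r Er; exact: hL.
have hi := ge_inf hlb Er0.
rewrite ler0_norm; lra.
Qed.

Lemma inner_ipform (R : realType) K : ipform (@inner R K).
Proof.
split.
- move=> x y z; rewrite /inner -big_split; apply: eq_bigr => i _; by rewrite !mxE mulrDl.
- move=> a x z; rewrite /inner mulr_sumr; apply: eq_bigr => i _; by rewrite !mxE mulrA.
- move=> x y; rewrite /inner; apply: eq_bigr => i _; exact: mulrC.
- move=> x; rewrite /inner; apply: sumr_ge0 => i _; rewrite -expr2; exact: sqr_ge0.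
Qed.

Lemma pinner_ipform (R : realType) K n : ipform (@pinner R K n).
Proof.
have Hi := inner_ipform R.
split.
- move=> x y z; rewrite /pinner /= !(ipDl (Hi _)); ring.
- move=> a x z; rewrite /pinner /= !(ipZl (Hi _)); ring.
- move=> x y; rewrite /pinner !(ipC (Hi _) x.1) !(ipC (Hi _) x.2) //.
- move=> x; rewrite /pinner; apply: addr_ge0; exact: ipge0.
Qed.

Lemma tangent0 (R : realType) K (M : set 'rV[R]_K) x : tangent M x 0.
Proof.
move=> m h U [[oU Ux] dh _ _ _].
by rewrite (deriveE _ (dh x Ux)) linear0.
Qed.

Lemma tangentZD (R : realType) K (M : set 'rV[R]_K) x a u w :
  tangent M x u -> tangent M x w -> tangent M x (a *: u + w).
Proof.
move=> hu hw m h U hl; have [[oU Ux] dh _ _ _] := hl.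
rewrite (deriveE _ (dh x Ux)) linearD linearZZ.
by rewrite -!(deriveE _ (dh x Ux)) (hu _ _ _ hl) (hw _ _ _ hl) scaler0 addr0.
Qed.

Lemma rgrad_tangent (R : realType) K (M : set 'rV[R]_K) F x : tangent M x (rgrad M F x).
Proof. rewrite /rgrad; case: xgetP => [y _ [Ty _] | _] //; exact: tangent0. Qed.

Lemma pgrad_ptangent (R : realType) K n (M : set 'rV[R]_K) (F : 'rV[R]_K -> 'rV[R]_n -> R) x y :
  ptangent M x (pgrad M F x y).
Proof. rewrite /pgrad; case: xgetP => [z _ [Tz _] | _] //; exact: tangent0. Qed.

Lemma fst_sum (R : realType) K n (I : finType) (F : I -> ('rV[R]_K * 'rV[R]_n)%type) :
  (\sum_i F i).1 = \sum_i (F i).1.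
Proof. exact: (big_morph fst (fun _ _ => erefl) erefl). Qed.

Lemma snd_sum (R : realType) K n (I : finType) (F : I -> ('rV[R]_K * 'rV[R]_n)%type) :
  (\sum_i F i).2 = \sum_i (F i).2.
Proof. exact: (big_morph snd (fun _ _ => erefl) erefl). Qed.

Theorem proposition4 (R : realType) (K n p s : nat) (M : set 'rV[R]_K)
    (f : 'rV[R]_K -> 'rV[R]_n -> R) (c : 'I_p -> 'rV[R]_K -> 'rV[R]_n -> R)
    (g : 'I_s -> 'rV[R]_n -> R) (xs : 'rV[R]_K) (ys : 'rV[R]_n) (eps : R) :
  is_submanifold M ->
  (forall z : 'rV[R]_K * 'rV[R]_n, differentiable (fun w => f w.1 w.2) z) ->
  (forall i (z : 'rV[R]_K * 'rV[R]_n), differentiable (fun w => c i w.1 w.2) z) ->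
  (forall j (y : 'rV[R]_n), differentiable (g j) y) ->
  M xs -> (forall i, c i xs ys = 0) -> (forall j, g j ys <= 0) ->
  LICQ M c g xs ys ->
  0 <= eps ->
  (Num.max (m_x M f c xs ys) (m_y f c g xs ys) <= eps ->
     approx_stationary M f c g eps xs ys) /\
  (m_KKT M f c g xs ys <= eps -> approx_KKT M f c g eps xs ys).
Proof.
move=> _ _ _ _ _ _ _ _ eps0.
have Hi := inner_ipform R.
have TR : forall F, tangent M xs (rgrad M F xs) := fun F => @rgrad_tangent R K M F xs.
have PR : forall F, ptangent M xs (pgrad M F xs ys) := fun F => @pgrad_ptangent R K n M F xs ys.
have TT0 : tangent M xs 0 := @tangent0 R K M xs.
split.
  move=> hmax.
  have hx : m_x M f c xs ys <= eps by apply: le_trans hmax; rewrite le_max lexx.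
  have hy : m_y f c g xs ys <= eps by apply: le_trans hmax; rewrite le_max lexx orbT.
  split.
    have := eq_ineq_dir (Hi K) (@tangent0 R K M xs) (@tangentZD R K M xs)
      (a := fun i => rgrad M (c i ^~ ys) xs) (b := fun j : 'I_0 => 0) pred0
      (v := rgrad M (f ^~ ys) xs) (TR _) (fun i => TR _)
      (fun j => TT0).
    move=> [lam [mu [_ [_ [d [Td hda _ dd vd]]]]]].
    exists lam; rewrite big_ord0 addr0 in vd.
    apply: le_trans hx; rewrite /m_x.
    apply: (inf_step (r0 := inner (rgrad M (f^~ys) xs) d)
                     (L := - ((inner (rgrad M (f^~ys) xs) (rgrad M (f^~ys) xs) + 1) / 2))).
    - by exists d; split => //; rewrite /enorm sqrt_le1.
    - by rewrite vd.
    - by move=> r [d' [_ _ hd' ->]]; apply: (lb_ip (Hi K)); rewrite -sqrt_le1.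
    - exact: sqrtr_ge0.
  have := eq_ineq_dir (Hi n) (T := setT) Logic.I (fun _ _ _ _ _ => Logic.I)
      (a := fun i => egrad (c i xs) ys) (b := fun j => egrad (g j) ys)
      (fun j => g j ys == 0) (v := egrad (f xs) ys) Logic.I
      (fun i => Logic.I) (fun j => Logic.I).
  move=> [lam [mu [mu0 [muact [d [_ hda hdb dd vd]]]]]].
  exists lam, mu; split => //; split.
    apply: le_trans hy; rewrite /m_y.
    apply: (inf_step (r0 := inner (egrad (f xs) ys) d)
                     (L := - ((inner (egrad (f xs) ys) (egrad (f xs) ys) + 1) / 2))).
    - exists d; split => //; last by rewrite /enorm sqrt_le1.
      by move=> j /eqP hj; apply: hdb.
    - by rewrite vd.
    - by move=> r [d' [_ _ hd' ->]]; apply: (lb_ip (Hi n)); rewrite -sqrt_le1.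
    - exact: sqrtr_ge0.
  move=> j; case: (eqVneq (g j ys) 0) => [->|gj]; first by rewrite mulr0.
  by rewrite muact ?mul0r.
move=> hk.
have Hp := pinner_ipform R K n.
have T0 : ptangent M xs (0 : 'rV[R]_K * 'rV[R]_n) by exact: tangent0.
have TZD : forall a (x y : 'rV[R]_K * 'rV[R]_n), ptangent M xs x -> ptangent M xs y ->
    ptangent M xs (a *: x + y).
  by move=> a x y hx hy; apply: tangentZD.
have := eq_ineq_dir Hp T0 TZD
      (a := fun i => pgrad M (c i) xs ys) (b := fun j => pgrad M (fun _ => g j) xs ys)
      (fun j => g j ys == 0) (v := pgrad M f xs ys) (PR _)
      (fun i => PR _) (fun j => PR _).
move=> [lam [mu [mu0 [muact [d [Td hda hdb dd vd]]]]]].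
exists lam, mu; split => //; split.
  set u := (pgrad M f xs ys + _ + _) in vd.
  rewrite [X in pnorm X](_ : _ = u); last first.
    by rewrite [RHS]surjective_pairing /u /= !fst_sum !snd_sum.
  apply: le_trans hk; rewrite /m_KKT.
  apply: (inf_step (r0 := pinner (pgrad M f xs ys) d)
                   (L := - ((pinner (pgrad M f xs ys) (pgrad M f xs ys) + 1) / 2))).
  - exists d; split => //; last by rewrite /pnorm sqrt_le1.
    by move=> j /eqP hj; apply: hdb.
  - by rewrite vd.
  - by move=> r [d' [_ _ _ hd' ->]]; apply: (lb_ip Hp); rewrite -sqrt_le1.
  - exact: sqrtr_ge0.
move=> j; case: (eqVneq (g j ys) 0) => [->|gj]; first by rewrite mulr0.
by rewrite muact ?mul0r.
Qed.
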